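(* Let $p$ be a prime and $k\geq 0$. Then $A_1(H)$ contains an element of order $p^k$ if and only if $H$ contains an element of order $p^k$.
   Context: Let $H$ be a group and $\{F_i\}_{i\in I}$ the set of all finitely generated abelian subgroups of $H$; let $C_i=C_H(F_i)$. Write $\Delta_K=\{(k,k):k\in K\}$ and $\Delta'_F=\{(f^{-1},f):f\in F\}$ in $H\times H$. $A_1(H)$ is the generalized HNN extension of $H\times H$ with stable letters $t_i$ ($i\in I$) and relations $(k,fk)=t_i(f^{-1},fk)t_i^{-1}$ for all $f\in F_i$, $k\in C_i$ (identifying $(1\times F_i)\cdot\Delta_{C_i}\cong\Delta'_{F_i}\cdot(1\times C_i)$ via $(k,fk)\mapsto(f^{-1},fk)$). *)

(* Defs.v *)
From Stdlib Require Import List.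
From mathcomp Require Import all_boot.
Set Implicit Arguments. Unset Strict Implicit.

Record AGroup := {
  gcar :> Type;
  gmul : gcar -> gcar -> gcar;
  gone : gcar;
  ginv : gcar -> gcar;
  gmulA : forall x y z, gmul x (gmul y z) = gmul (gmul x y) z;
  gmul1 : forall x, gmul gone x = x;
  gmulV : forall x, gmul (ginv x) x = gone
}.

Section Defs.
Variable H : AGroup.
Local Notation "x * y" := (gmul x y).
Local Notation "1" := (gone H).

Fixpoint gpow (x : H) (n : nat) : H :=
  match n with O => 1 | S n' => x * gpow x n' end.

Definition has_order (x : H) (n : nat) : Prop :=
  0 < n /\ gpow x n = 1 /\ (forall m, 0 < m -> m < n -> gpow x m <> 1).

Inductive gen_by (l : seq H) : H -> Prop :=
| gen_in x : List.In x l -> gen_by l x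
| gen_one : gen_by l 1
| gen_mul x y : gen_by l x -> gen_by l y -> gen_by l (x * y)
| gen_inv x : gen_by l x -> gen_by l (ginv x).

Definition fg_abelian_subgroup (S : H -> Prop) : Prop :=
  (exists l : seq H, forall x, S x <-> gen_by l x) /\
  (forall x y, S x -> S y -> x * y = y * x).

Definition FGA := { S : H -> Prop | fg_abelian_subgroup S }.

Definition centralizer (S : H -> Prop) (k : H) : Prop :=
  forall f, S f -> f * k = k * f.

(** Generators of A_1(H): elements (a,b) of H x H, stable letters t_i and t_i^{-1}. *)
Inductive A1_letter :=
| LH (a b : H)
| LT (i : FGA)
| LTi (i : FGA).

Definition A1_word := seq A1_letter.

(** Defining relations of A_1(H) (relators of H x H, of the free stable letters,
    and the HNN relations  t_i (f^-1, f k) t_i^-1 = (k, f k), f in F_i, k in C_i). *)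
Inductive A1_rel : A1_word -> A1_word -> Prop :=
| rel_HH a b c d : A1_rel [:: LH a b; LH c d] [:: LH (a * c) (b * d)]
| rel_H1 : A1_rel [:: LH 1 1] [::]
| rel_TTi i : A1_rel [:: LT i; LTi i] [::]
| rel_TiT i : A1_rel [:: LTi i; LT i] [::]
| rel_HNN (i : FGA) f k :
    proj1_sig i f -> centralizer (proj1_sig i) k ->
    A1_rel [:: LT i; LH (ginv f) (f * k); LTi i] [:: LH k (f * k)].

Inductive A1_eq : A1_word -> A1_word -> Prop :=
| A1_refl w : A1_eq w w
| A1_sym u v : A1_eq u v -> A1_eq v u
| A1_trans u v w : A1_eq u v -> A1_eq v w -> A1_eq u w
| A1_ctx x u v y : A1_rel u v -> A1_eq (x ++ u ++ y) (x ++ v ++ y).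

Fixpoint A1_pow (w : A1_word) (n : nat) : A1_word :=
  match n with O => [::] | S n' => w ++ A1_pow w n' end.

Definition A1_has_order (w : A1_word) (n : nat) : Prop :=
  0 < n /\ A1_eq (A1_pow w n) [::] /\
  (forall m, 0 < m -> m < n -> ~ A1_eq (A1_pow w m) [::]).

End Defs.

(* Main.v *)
Require Import Defs.
From mathcomp Require Import all_boot.
From Stdlib Require Import Classical ClassicalEpsilon FunctionalExtensionality PropExtensionality.
Set Implicit Arguments. Unset Strict Implicit.

Section GroupLemmas.
Variable G : AGroup.
Local Notation "x ** y" := (gmul x y) (at level 40, left associativity).
Local Notation "1" := (gone G).

Lemma mulgV' (x : G) : x ** ginv x = 1.
Proof.
  rewrite -(gmul1 (x ** ginv x)).
  rewrite -{1}(gmulV (ginv x)).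
  rewrite -gmulA (gmulA (ginv x) x (ginv x)) gmulV gmul1 gmulV. reflexivity.
Qed.

Lemma mulg1' (x : G) : x ** 1 = x.
Proof. by rewrite -(gmulV x) gmulA mulgV' gmul1. Qed.

Lemma mulg_cancl (x y z : G) : x ** y = x ** z -> y = z.
Proof. move=> h. by rewrite -(gmul1 y) -(gmulV x) -gmulA h gmulA gmulV gmul1. Qed.

Lemma mulg_cancr (x y z : G) : y ** x = z ** x -> y = z.
Proof. move=> h. by rewrite -(mulg1' y) -(mulgV' x) gmulA h -gmulA mulgV' mulg1'. Qed.

Lemma invgK (x : G) : ginv (ginv x) = x.
Proof. apply: (@mulg_cancl (ginv x)). by rewrite mulgV' gmulV. Qed.

Lemma invgM (x y : G) : ginv (x ** y) = ginv y ** ginv x.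
Proof.
  apply: (@mulg_cancl (x ** y)). rewrite mulgV' -gmulA (gmulA y) mulgV' gmul1 mulgV'. done.
Qed.

Lemma invg1 : ginv 1 = 1.
Proof. by rewrite -{2}(gmulV 1) mulg1'. Qed.

Lemma invg_inj (x y : G) : ginv x = ginv y -> x = y.
Proof. move=> h. by rewrite -(invgK x) h invgK. Qed.

Lemma gpowD (x : G) m n : gpow x (m + n) = gpow x m ** gpow x n.
Proof. elim: m => [|m IH] /=; first by rewrite gmul1. by rewrite IH gmulA. Qed.

Lemma gpowM1 (x : G) m q : gpow x m = 1 -> gpow x (m * q) = 1.
Proof. move=> h. elim: q => [|q IH]; first by rewrite muln0.
  by rewrite mulnS gpowD h IH gmul1. Qed.

End GroupLemmas.

Definition prodG (H : AGroup) : AGroup.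
Proof.
  refine (@Build_AGroup (gcar H * gcar H)
    (fun x y => (gmul x.1 y.1, gmul x.2 y.2)) (gone H, gone H)
    (fun x => (ginv x.1, ginv x.2)) _ _ _).
  - move=> [a b] [c d] [e f] /=. by rewrite !gmulA.
  - move=> [a b] /=. by rewrite !gmul1.
  - move=> [a b] /=. by rewrite !gmulV.
Defined.

Definition rep (G : AGroup) (S : G -> Prop) (x : G) : G :=
  match excluded_middle_informative (S x) with
  | left _ => gone G
  | right _ => epsilon (inhabits (gone G)) (fun r => S (gmul r (ginv x)))
  end.

Section Cosets.
Variable G : AGroup.
Local Notation "x ** y" := (gmul x y) (at level 40, left associativity).
Local Notation "1" := (gone G).
Variable S : G -> Prop.
Hypothesis S1 : S 1.
Hypothesis SM : forall x y, S x -> S y -> S (x ** y).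
Hypothesis SV : forall x, S x -> S (ginv x).

Lemma S_cancel g h : S h -> S (g ** h) -> S g.
Proof. move=> Hh Hgh. have := SM Hgh (SV Hh). by rewrite -gmulA mulgV' mulg1'. Qed.

Lemma S_cancel_l g h : S g -> S (g ** h) -> S h.
Proof. move=> Hg Hgh. have := SM (SV Hg) Hgh. by rewrite gmulA gmulV gmul1. Qed.

Lemma rep_spec x : S (x ** ginv (rep S x)).
Proof.
  rewrite /rep. case: (excluded_middle_informative (S x)) => Hx.
  - by rewrite invg1 mulg1'.
  - have := epsilon_spec (inhabits (gone G)) (fun r => S (gmul r (ginv x))).
    set r := epsilon _ _. move=> H. have := H (ex_intro _ x _).
    move=> H'. have Hr := H' (ltac:(by rewrite mulgV')).
    have := SV Hr. by rewrite invgM invgK.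
Qed.

Lemma rep_in x : S x -> rep S x = 1.
Proof. rewrite /rep. by case: (excluded_middle_informative (S x)). Qed.

Lemma rep1_in x : rep S x = 1 -> S x.
Proof. move=> h. have := rep_spec x. by rewrite h invg1 mulg1'. Qed.

Lemma rep_mul s x : S s -> rep S (s ** x) = rep S x.
Proof.
  move=> Hs. rewrite /rep.
  have E1 : S (s ** x) <-> S x.
  { split. - move=> h. exact: (S_cancel_l Hs h). - move=> h; exact: SM. }
  have E2 : (fun r => S (gmul r (ginv (s ** x)))) = (fun r => S (gmul r (ginv x))).
  { apply: functional_extensionality => r. apply: propositional_extensionality.
    rewrite invgM gmulA. split.
    - move=> h. exact: (S_cancel (SV Hs) h).
    - move=> h. apply: SM => //. exact: SV. }
  case: (excluded_middle_informative (S (s ** x))) => h1;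
  case: (excluded_middle_informative (S x)) => h2 //.
  - by exfalso; apply: h2; apply E1.
  - by exfalso; apply: h1; apply E1.
  - by rewrite E2.
Qed.

Lemma rep_idem x : rep S (rep S x) = rep S x.
Proof.
  have h := rep_spec x.
  have e : rep S x = ginv (x ** ginv (rep S x)) ** x.
  { by rewrite invgM invgK -gmulA gmulV mulg1'. }
  rewrite {1}e rep_mul //. exact: SV.
Qed.

Lemma rep_decomp x : x = (x ** ginv (rep S x)) ** rep S x.
Proof. by rewrite -gmulA gmulV mulg1'. Qed.

End Cosets.

Section HNNSetup.
Variable H : AGroup.
Local Notation "x ** y" := (gmul x y) (at level 40, left associativity).
Local Notation G := (prodG H).

Definition Fp (i : FGA H) : H -> Prop := proj1_sig i.
Definition Par (i : FGA H) (fk : H * H) : Prop := Fp i fk.1 /\ centralizer (Fp i) fk.2.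
Definition alpha (fk : H * H) : G := (ginv fk.1, fk.1 ** fk.2).
Definition beta (fk : H * H) : G := (fk.2, fk.1 ** fk.2).
Definition mapE (e : bool) : H * H -> G := if e then alpha else beta.
Definition SA (i : FGA H) (e : bool) (x : G) : Prop := exists fk, Par i fk /\ x = mapE e fk.
Definition parof (i : FGA H) (e : bool) (x : G) : H * H :=
  epsilon (inhabits (gone H, gone H)) (fun fk => Par i fk /\ x = mapE e fk).
Definition tr (i : FGA H) (e : bool) (x : G) : G := mapE (~~ e) (parof i e x).

Lemma F1 i : Fp i (gone H).
Proof. case: i => S [[l hl] hc] /=. rewrite /Fp /=. apply/hl. exact: gen_one. Qed.
Lemma FM i x y : Fp i x -> Fp i y -> Fp i (x ** y).
Proof. case: i => S [[l hl] hc]; rewrite /Fp /= => /hl a /hl b. apply/hl. exact: gen_mul. Qed.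
Lemma FV i x : Fp i x -> Fp i (ginv x).
Proof. case: i => S [[l hl] hc]; rewrite /Fp /= => /hl a. apply/hl. exact: gen_inv. Qed.
Lemma Fcomm i x y : Fp i x -> Fp i y -> x ** y = y ** x.
Proof. case: i => S [[l hl] hc]; rewrite /Fp /=. exact: hc. Qed.

Lemma commV (a b : H) : a ** b = b ** a -> ginv a ** ginv b = ginv b ** ginv a.
Proof. move=> h. by rewrite -!invgM h. Qed.
Lemma commVr (a b : H) : a ** b = b ** a -> a ** ginv b = ginv b ** a.
Proof.
  move=> h. apply: (@mulg_cancl _ b). rewrite gmulA -h -gmulA mulgV' mulg1' gmulA mulgV' gmul1. done.
Qed.

Lemma Par1 i : Par i (gone H, gone H).
Proof. split; first exact: F1. move=> f _ /=. by rewrite gmul1 mulg1'. Qed.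
Lemma ParM i p q : Par i p -> Par i q -> Par i (p.1 ** q.1, p.2 ** q.2).
Proof.
  move=> [hp1 hp2] [hq1 hq2]; split => /=; first exact: FM.
  move=> f hf. by rewrite gmulA hp2 // -!gmulA hq2.
Qed.
Lemma ParV i p : Par i p -> Par i (ginv p.1, ginv p.2).
Proof.
  move=> [hp1 hp2]; split => /=; first exact: FV.
  move=> f hf. have := hp2 f hf. move/commVr. done.
Qed.

Lemma alphaM i p q : Par i p -> Par i q -> alpha (p.1 ** q.1, p.2 ** q.2) = gmul (alpha p) (alpha q).
Proof.
  case: p => f k; case: q => f' k' [hf hk] [hf' hk'] /=. rewrite /alpha /=. congr (_, _).
  - rewrite invgM. apply: commV. exact: (Fcomm hf' hf).
  - have c := hk f' hf'. simpl in c. by rewrite -!gmulA (gmulA k f') -c -!gmulA.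
Qed.
Lemma betaM i p q : Par i p -> Par i q -> beta (p.1 ** q.1, p.2 ** q.2) = gmul (beta p) (beta q).
Proof.
  case: p => f k; case: q => f' k' [hf hk] [hf' hk'] /=. rewrite /beta /=. congr (_, _).
  have c := hk f' hf'. simpl in c. by rewrite -!gmulA (gmulA k f') -c -!gmulA.
Qed.
Lemma mapEM i e p q : Par i p -> Par i q -> mapE e (p.1 ** q.1, p.2 ** q.2) = gmul (mapE e p) (mapE e q).
Proof. case: e => /=; [exact: alphaM | exact: betaM]. Qed.

Lemma mapEV i e p : Par i p -> mapE e (ginv p.1, ginv p.2) = ginv (mapE e p).
Proof.
  case: p => f k [hf hk]. have c := hk f hf. case: e; rewrite /= /alpha /beta /=; congr (_, _).
  all: simpl in c; rewrite invgM; apply: commV; exact: c.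
Qed.

Lemma mapE1 e : mapE e (gone H, gone H) = gone G.
Proof. case: e; rewrite /= /alpha /beta /=; by rewrite ?invg1 gmul1. Qed.

Lemma mapE_inj e p q : mapE e p = mapE e q -> p = q.
Proof.
  case: p => f k; case: q => f' k'. case: e; rewrite /= /alpha /beta; case.
  - move=> /invg_inj -> h. by rewrite (mulg_cancl h).
  - move=> -> h. by rewrite (mulg_cancr h).
Qed.

Lemma SA1 i e : SA i e (gone G).
Proof. exists (gone H, gone H). split; [exact: Par1 | by rewrite mapE1]. Qed.
Lemma SAM i e x y : SA i e x -> SA i e y -> SA i e (gmul x y).
Proof. move=> [p [hp ->]] [q [hq ->]]. exists (p.1 ** q.1, p.2 ** q.2). split; [exact: (ParM hp hq)| by rewrite (mapEM _ hp hq)]. Qed.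
Lemma SAV i e x : SA i e x -> SA i e (ginv x).
Proof. move=> [p [hp ->]]. exists (ginv p.1, ginv p.2). split; [exact: (ParV hp)| by rewrite (mapEV _ hp)]. Qed.

Lemma parof_spec i e x : SA i e x -> Par i (parof i e x) /\ x = mapE e (parof i e x).
Proof. move=> h. exact: (epsilon_spec (inhabits (gone H, gone H)) (fun fk => Par i fk /\ x = mapE e fk) h). Qed.

Lemma parof_map i e p : Par i p -> parof i e (mapE e p) = p.
Proof.
  move=> hp. have [_ h] := parof_spec (ltac:(by exists p) : SA i e (mapE e p)).
  by apply: (@mapE_inj e); rewrite -h.
Qed.

Lemma tr_in i e x : SA i e x -> SA i (~~ e) (tr i e x).
Proof. move=> h. have [hp _] := parof_spec h. by exists (parof i e x). Qed.

Lemma tr_tr i e x : SA i e x -> tr i (~~ e) (tr i e x) = x.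
Proof.
  move=> h. have [hp hx] := parof_spec h. rewrite /tr parof_map // negbK. done.
Qed.

Lemma tr_tr' i e x : SA i (~~ e) x -> tr i e (tr i (~~ e) x) = x.
Proof. move=> h. have := tr_tr h. by rewrite negbK. Qed.

Lemma tr_mul i e x y : SA i e x -> SA i e y -> tr i e (gmul x y) = gmul (tr i e x) (tr i e y).
Proof.
  move=> hx hy. have [px ex] := parof_spec hx. have [py ey] := parof_spec hy.
  rewrite /tr {1}ex {1}ey -(mapEM _ px py) parof_map; last exact: ParM.
  exact: (mapEM _ px py).
Qed.

Lemma tr_alpha i p : Par i p -> tr i true (alpha p) = beta p.
Proof. move=> hp. rewrite /tr. have -> : alpha p = mapE true p by []. by rewrite parof_map. Qed.

End HNNSetup.

Arguments gmul : simpl never.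
Arguments ginv : simpl never.
Arguments gone : simpl never.

Section Action.
Variable H : AGroup.
Local Notation G := (prodG H).
Local Notation "x ** y" := (@gmul G x y) (at level 40, left associativity).
Local Notation "1" := (gone G).

Definition Lt := list (FGA H * bool * G).
Definition nf := (G * Lt)%type.

Definition canc (i : FGA H) (e : bool) (r : G) (L : Lt) : Prop :=
  r = 1 /\ match L with (j, e', _) :: _ => (j = i /\ e' = ~~ e) | [::] => False end.
Definition hdr (L : Lt) : G := match L with (_, _, r) :: _ => r | [::] => 1 end.

Definition rp i e (x : G) : G := rep (SA i e) x.

Definition stepT (i : FGA H) (e : bool) (w : nf) : nf :=
  let r := rp i e w.1 in
  let y := tr i e (w.1 ** ginv r) in
  if excluded_middle_informative (canc i e r w.2) then (y ** hdr w.2, behead w.2)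
  else (y, (i, e, r) :: w.2).

Fixpoint validL (L : Lt) : Prop :=
  match L with
  | [::] => True
  | (i, e, r) :: L' => rp i e r = r /\ ~ canc i e r L' /\ validL L'
  end.

Definition mulN (x : G) (w : nf) : nf := (x ** w.1, w.2).

Definition actL (l : A1_letter H) (w : nf) : nf :=
  match l with
  | LH a b => mulN (a, b) w
  | LT i => stepT i true w
  | LTi i => stepT i false w
  end.

Definition act (u : A1_word H) (w : nf) : nf := foldr actL w u.

Lemma rp_spec i e x : SA i e (x ** ginv (rp i e x)).
Proof. exact: (rep_spec (SA1 i e) (fun y => @SAV H i e y) x). Qed.
Lemma rp_in i e x : SA i e x -> rp i e x = 1.
Proof. exact: rep_in. Qed.
Lemma rp1_in i e x : rp i e x = 1 -> SA i e x.
Proof. exact: (rep1_in (SA1 i e) (fun y => @SAV H i e y)). Qed.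
Lemma rp_mul i e s x : SA i e s -> rp i e (s ** x) = rp i e x.
Proof. exact: (rep_mul (fun a b => @SAM H i e a b) (fun y => @SAV H i e y)). Qed.
Lemma rp_idem i e x : rp i e (rp i e x) = rp i e x.
Proof. exact: (rep_idem (SA1 i e) (fun a b => @SAM H i e a b) (fun y => @SAV H i e y)). Qed.
Lemma rp_decomp i e x : x = (x ** ginv (rp i e x)) ** rp i e x.
Proof. exact: rep_decomp. Qed.

Lemma stepT_c i e g0 L : canc i e (rp i e g0) L ->
  stepT i e (g0, L) = (tr i e (g0 ** ginv (rp i e g0)) ** hdr L, behead L).
Proof. move=> h. rewrite /stepT. by case: (excluded_middle_informative _). Qed.
Lemma stepT_n i e g0 L : ~ canc i e (rp i e g0) L ->
  stepT i e (g0, L) = (tr i e (g0 ** ginv (rp i e g0)), (i, e, rp i e g0) :: L).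
Proof. move=> h. rewrite /stepT. by case: (excluded_middle_informative _). Qed.

Lemma valid_step i e w : validL w.2 -> validL (stepT i e w).2.
Proof.
  case: w => g0 L /= hv. rewrite /stepT /=.
  case: (excluded_middle_informative _) => hc /=.
  - case: L hv hc => [|[[j e'] r'] L'] /=; first by move=> _ [].
    by move=> [_ [_ h]].
  - split; first exact: rp_idem. by split.
Qed.

Lemma step_inv i e w : validL w.2 -> stepT i (~~ e) (stepT i e w) = w.
Proof.
  case: w => g0 L /= hv.
  have ha := rp_spec i e g0.
  have hy := tr_in ha.
  case: (excluded_middle_informative (canc i e (rp i e g0) L)) => hc.
  - rewrite (stepT_c hc).
    case: L hv hc => [|[[j e'] r'] L'] /=; first by move=> _ [_ []].
    move=> [hr' [hnc hvL]] [hr1 [ej ee]]. rewrite ej ee in hr' hnc *.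
    rewrite stepT_n; last by rewrite rp_mul // hr'.
    rewrite rp_mul // hr' -gmulA mulgV' mulg1' tr_tr // hr1 invg1 mulg1'. done.
  - rewrite (stepT_n hc). rewrite stepT_c.
    + rewrite (rp_in hy) invg1 mulg1' tr_tr //= -rp_decomp. done.
    + rewrite (rp_in hy). split => //. by rewrite negbK.
Qed.

Lemma step_hnn i e x w : validL w.2 -> SA i e x ->
  stepT i e (mulN x (stepT i (~~ e) w)) = mulN (tr i e x) w.
Proof.
  case: w => g0 L /= hv hx.
  have hb := rp_spec i (~~ e) g0.
  have hy := tr_in hb. rewrite negbK in hy.
  case: (excluded_middle_informative (canc i (~~ e) (rp i (~~ e) g0) L)) => hc.
  - rewrite (stepT_c hc).
    case: L hv hc => [|[[j e'] r'] L'] /=; first by move=> _ [_ []].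
    move=> [hr' [hnc hvL]] [hr1 [ej ee]]. rewrite ej ee negbK in hr' hnc *.
    rewrite /mulN /= gmulA.
    rewrite stepT_n; last by rewrite rp_mul ?hr' //; exact: SAM.
    rewrite rp_mul ?hr' //; last exact: SAM.
    rewrite -gmulA mulgV' mulg1' tr_mul // tr_tr' // hr1 invg1 mulg1'. done.
  - rewrite (stepT_n hc) /mulN /=. rewrite stepT_c.
    + rewrite (rp_in (SAM hx hy)) invg1 mulg1' tr_mul // tr_tr' //= -gmulA -rp_decomp. done.
    + rewrite (rp_in (SAM hx hy)). done.
Qed.

End Action.

Section Words.
Variable H : AGroup.
Local Notation G := (prodG H).
Local Notation "x ** y" := (@gmul G x y) (at level 40, left associativity).
Local Notation "1" := (gone G).

Lemma act_cat (u v : A1_word H) w : act (u ++ v) w = act u (act v w).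
Proof. by rewrite /act foldr_cat. Qed.

Lemma valid_actL l (w : nf H) : validL w.2 -> validL (actL l w).2.
Proof. case: l => [a b|i|i] /= h //; exact: valid_step. Qed.

Lemma valid_act u (w : nf H) : validL w.2 -> validL (act u w).2.
Proof. elim: u => [|l u IH] //= h. apply: valid_actL. exact: IH. Qed.

Lemma rel_act u v (w : nf H) : A1_rel u v -> validL w.2 -> act u w = act v w.
Proof.
  case=> {u v}.
  - move=> a b c d hv. rewrite /= /mulN /=. by rewrite gmulA.
  - move=> hv. rewrite /= /mulN /=. case: w hv => g L /= _.
    have -> : ((gone H, gone H) : G) = 1 by []. by rewrite gmul1.
  - move=> i hv /=. exact: (step_inv i false hv).
  - move=> i hv /=. exact: (step_inv i true hv).
  - move=> i f k hf hk hv /=.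
    have hp : Par i (f, k) by split.
    have hx : SA i true (alpha (f, k)) by exists (f, k).
    have := step_hnn hv hx. rewrite tr_alpha //.
Qed.

Lemma eq_act u v (w : nf H) : A1_eq u v -> validL w.2 -> act u w = act v w.
Proof.
  move=> h. elim: h w => {u v}.
  - by [].
  - move=> u v _ IH w hv. by rewrite IH.
  - move=> u v x _ IH1 _ IH2 w hv. by rewrite IH1 // IH2.
  - move=> x u v y hr w hv. rewrite !act_cat. congr (act x _).
    apply: rel_act => //. exact: valid_act.
Qed.

Definition w0 : nf H := (1, [::]).

Lemma eq_act0 (u v : A1_word H) : A1_eq u v -> act u w0 = act v w0.
Proof. move=> h. exact: eq_act. Qed.

Lemma eq_ctx (x u v y : A1_word H) : A1_eq u v -> A1_eq (x ++ u ++ y) (x ++ v ++ y).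
Proof.
  move=> h. elim: h x y => {u v}.
  - move=> w x y. exact: A1_refl.
  - move=> u v _ IH x y. apply: A1_sym. exact: IH.
  - move=> u v w _ IH1 _ IH2 x y. exact: (A1_trans (IH1 x y) (IH2 x y)).
  - move=> x' u v y' hr x y.
    have := A1_ctx (x ++ x') (y' ++ y) hr. by rewrite !catA -!(catA (x ++ x')) -!catA.
Qed.

Lemma eq_catl (x u v : A1_word H) : A1_eq u v -> A1_eq (x ++ u) (x ++ v).
Proof. move=> h. have := eq_ctx x [::] h. by rewrite !cats0. Qed.
Lemma eq_catr (y u v : A1_word H) : A1_eq u v -> A1_eq (u ++ y) (v ++ y).
Proof. move=> h. exact: (eq_ctx [::] y h). Qed.
Lemma eq_cat (u v u' v' : A1_word H) : A1_eq u v -> A1_eq u' v' -> A1_eq (u ++ u') (v ++ v').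
Proof. move=> h1 h2. apply: A1_trans (eq_catr _ h1) (eq_catl _ h2). Qed.
Lemma eq_rel (u v : A1_word H) : A1_rel u v -> A1_eq u v.
Proof. move=> h. have := A1_ctx [::] [::] h. by rewrite /= !cats0. Qed.

Definition invL (l : A1_letter H) : A1_letter H :=
  match l with LH a b => LH (ginv a) (ginv b) | LT i => LTi i | LTi i => LT i end.
Definition invW (u : A1_word H) : A1_word H := rev (map invL u).

Lemma invLK (l : A1_letter H) : invL (invL l) = l.
Proof. case: l => [a b|i|i] //=. by rewrite !invgK. Qed.
Lemma invWK (u : A1_word H) : invW (invW u) = u.
Proof. rewrite /invW map_rev revK -map_comp. rewrite (eq_map invLK). exact: map_id. Qed.

Lemma letter_inv (l : A1_letter H) : A1_eq [:: l; invL l] [::].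
Proof.
  case: l => [a b|i|i] /=.
  - apply: A1_trans (eq_rel (rel_HH _ _ _ _)) _. rewrite !mulgV'. exact: eq_rel (rel_H1 _).
  - exact: eq_rel (rel_TTi i).
  - exact: eq_rel (rel_TiT i).
Qed.

Lemma word_inv (u : A1_word H) : A1_eq (u ++ invW u) [::].
Proof.
  elim: u => [|l u IH] /=; first exact: A1_refl.
  rewrite /invW /= rev_cons -cats1 -/(invW u).
  have := eq_ctx [:: l] [:: invL l] IH. rewrite /= => h.
  apply: A1_trans _ (letter_inv l). have := h. by rewrite /= catA.
Qed.

Lemma word_inv' (u : A1_word H) : A1_eq (invW u ++ u) [::].
Proof. have := word_inv (invW u). by rewrite invWK. Qed.

Definition TP (u : A1_word H) (n : nat) : Prop := A1_eq (A1_pow u n) [::].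

Lemma pow_eq (u v : A1_word H) n : A1_eq u v -> A1_eq (A1_pow u n) (A1_pow v n).
Proof.
  move=> h. elim: n => [|n IH] /=; first exact: A1_refl. exact: eq_cat.
Qed.

Lemma TP_eq (u v : A1_word H) n : A1_eq u v -> (TP u n <-> TP v n).
Proof.
  move=> h. rewrite /TP. split => h2.
  - apply: A1_trans _ h2. apply: A1_sym. exact: pow_eq.
  - apply: A1_trans _ h2. exact: pow_eq.
Qed.

Lemma pow_rot (u v : A1_word H) n : v ++ A1_pow (u ++ v) n = A1_pow (v ++ u) n ++ v.
Proof. elim: n => [|n IH] /=; first by rewrite cats0. by rewrite -!catA IH. Qed.

Lemma TP_rot1 (u v : A1_word H) n : TP (u ++ v) n -> TP (v ++ u) n.
Proof.
  rewrite /TP => h.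
  have e1 : A1_eq (A1_pow (v ++ u) n) ((A1_pow (v ++ u) n ++ v) ++ invW v).
  { rewrite -catA. apply: A1_sym. have := eq_catl (A1_pow (v ++ u) n) (word_inv v). by rewrite cats0. }
  apply: A1_trans e1 _. rewrite -pow_rot.
  apply: A1_trans _ (word_inv v). apply: eq_catr.
  have := eq_catl v h. by rewrite cats0.
Qed.

Lemma TP_rot (u v : A1_word H) n : TP (u ++ v) n <-> TP (v ++ u) n.
Proof. split; exact: TP_rot1. Qed.

End Words.

Section Britton.
Variable H : AGroup.
Local Notation G := (prodG H).
Local Notation "x ** y" := (@gmul G x y) (at level 40, left associativity).
Local Notation "1" := (gone G).

Definition tL (i : FGA H) (e : bool) : A1_letter H := if e then LT i else LTi i.
Definition hL (g : G) : A1_letter H := LH g.1 g.2.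

Fixpoint r0 (M : Lt H) : A1_word H :=
  match M with [::] => [::] | (i, e, g) :: M' => tL i e :: hL g :: r0 M' end.

Lemma r0_cat (M N : Lt H) : r0 (M ++ N) = r0 M ++ r0 N.
Proof. elim: M => [|[[i e] g] M IH] //=. by rewrite IH. Qed.

Definition hdk (M : Lt H) : option (FGA H * bool) :=
  match M with (j, e', _) :: _ => Some (j, e') | [::] => None end.

Definition pinch (i : FGA H) (e : bool) (g : G) (o : option (FGA H * bool)) : Prop :=
  match o with Some (j, e') => j = i /\ e' = ~~ e /\ SA i e g | None => False end.

Fixpoint red (M : Lt H) : Prop :=
  match M with [::] => True | (i, e, g) :: M' => ~ pinch i e g (hdk M') /\ red M' end.

Lemma actL_tL i e (w : nf H) : actL (tL i e) w = stepT i e w.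
Proof. by case: e. Qed.
Lemma actL_hL g (w : nf H) : actL (hL g) w = mulN g w.
Proof. by case: g. Qed.

Lemma act_r0_cons i e g (M : Lt H) (w : nf H) :
  act (r0 ((i, e, g) :: M)) w = stepT i e (mulN g (act (r0 M) w)).
Proof. rewrite /=. case: e; by case: g. Qed.

Lemma SA_cancel i e (g h : G) : SA i e h -> SA i e (g ** h) -> SA i e g.
Proof. exact: (S_cancel (fun a b => @SAM H i e a b) (fun y => @SAV H i e y)). Qed.

Lemma britton_inv i e g (M : Lt H) : red ((i, e, g) :: M) ->
  exists h r L', act (r0 ((i, e, g) :: M)) (w0 H) = (h, (i, e, r) :: L') /\ SA i (~~ e) h.
Proof.
  elim: M i e g => [|[[j e'] g'] M IH] i e g.
  - move=> _. rewrite act_r0_cons /w0 /mulN /=.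
    rewrite stepT_n; last by move=> [_ []].
    eexists; eexists; eexists; split; first reflexivity.
    apply: tr_in. exact: rp_spec.
  - move=> [hnp hr].
    have [h [r [L' [e1 hh]]]] := IH _ _ _ hr.
    rewrite act_r0_cons e1 /mulN /=.
    rewrite stepT_n.
    + eexists; eexists; eexists; split; first reflexivity.
      apply: tr_in. exact: rp_spec.
    + move=> [hr1 [ej ee]]. apply: hnp. rewrite /= ej. split => //. split => //.
      rewrite ee negbK in hh. rewrite ej in hh.
      apply: (SA_cancel hh). exact: rp1_in.
Qed.

Lemma britton (M : Lt H) : red M -> M <> [::] -> ~ A1_eq (r0 M) [::].
Proof.
  case: M => [|[[i e] g] M] // hr _ heq.
  have [h [r [L' [e1 _]]]] := britton_inv hr.
  have := eq_act0 heq. rewrite e1 /= /w0. done.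
Qed.

End Britton.

Section Reduce.
Variable H : AGroup.
Local Notation G := (prodG H).
Local Notation "x ** y" := (@gmul G x y) (at level 40, left associativity).
Local Notation "1" := (gone G).

Definition real (g0 : G) (M : Lt H) : A1_word H := hL g0 :: r0 M.

Lemma hL_mul (x y : G) : A1_eq [:: hL x; hL y] [:: hL (x ** y)].
Proof. exact: (eq_rel (rel_HH x.1 x.2 y.1 y.2)). Qed.

Lemma hL1 : A1_eq [:: hL 1] [::].
Proof. exact: (eq_rel (rel_H1 H)). Qed.

Lemma to_struct (u : A1_word H) : exists g0 M, A1_eq u (real g0 M).
Proof.
  elim: u => [|l u [g0 [M IH]]].
  - exists 1, [::]. apply: A1_sym. exact: hL1.
  - have h1 := eq_catl [:: l] IH. rewrite /= in h1.
    case: l h1 => [a b|i|i] h1.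
    + exists (((a, b) : G) ** g0), M. apply: A1_trans h1 _.
      exact: (eq_catr (r0 M) (hL_mul (a, b) g0)).
    + exists 1, ((i, true, g0) :: M). apply: A1_trans h1 _.
      apply: A1_sym. exact: (eq_catr (LT i :: hL g0 :: r0 M) hL1).
    + exists 1, ((i, false, g0) :: M). apply: A1_trans h1 _.
      apply: A1_sym. exact: (eq_catr (LTi i :: hL g0 :: r0 M) hL1).
Qed.

Fixpoint ml (M : Lt H) (z : G) : Lt H :=
  match M with
  | [::] => [::]
  | [:: (i, e, g)] => [:: (i, e, g ** z)]
  | x :: M' => x :: ml M' z
  end.

Lemma size_ml M z : size (ml M z) = size M.
Proof.
  elim: M => [|[[i e] g] M IH] //=. case: M IH => [|y M] IH //=. by rewrite IH.
Qed.

Lemma r0_ml M z : M <> [::] -> A1_eq (r0 M ++ [:: hL z]) (r0 (ml M z)).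
Proof.
  elim: M => [|[[i e] g] M IH] //= _. case: M IH => [|y M] IH /=.
  - exact: (eq_catl [:: tL i e] (hL_mul g z)).
  - have := IH ltac:(by []). rewrite /=. move=> h.
    exact: (eq_catl [:: tL i e; hL g] h).
Qed.

Lemma P5 i e (x : G) : SA i e x -> A1_eq [:: tL i e; hL x; tL i (~~ e)] [:: hL (tr i e x)].
Proof.
  move=> hx. have [hp ex] := parof_spec hx.
  case: (parof i e x) hp ex => f k [hf hk] ex.
  case: e hx ex => hx ex.
  - rewrite ex tr_alpha //. exact: (eq_rel (rel_HNN hf hk)).
  - rewrite ex.
    have e2 : tr i false (beta (f, k)) = alpha (f, k).
    { have -> : beta (f, k) = mapE false (f, k) by [].
      rewrite /tr parof_map //. }
    rewrite e2 /=.
    have h1 := eq_rel (rel_HNN hf hk).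
    (* LTi ; beta ; LT  ==  LTi ; LT ; alpha ; LTi ; LT  == alpha *)
    have h2 := eq_ctx [:: LTi i] [:: LT i] h1. rewrite /= in h2.
    apply: A1_trans (A1_sym h2) _.
    have h3 := eq_ctx [::] [:: LH (ginv f) (gmul f k); LTi i; LT i] (eq_rel (rel_TiT i)).
    rewrite /= in h3. apply: A1_trans h3 _.
    have h4 := eq_ctx [:: LH (ginv f) (gmul f k)] [::] (eq_rel (rel_TiT i)).
    rewrite /= in h4. exact: h4.
Qed.

Lemma not_red (M : Lt H) : ~ red M ->
  exists M1 i e g g' M2, M = M1 ++ (i, e, g) :: (i, ~~ e, g') :: M2 /\ SA i e g.
Proof.
  elim: M => [|[[i e] g] M IH] /=; first by [].
  move=> hn. case: (classic (red M)) => hr.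
  - have hp : pinch i e g (hdk M) by apply: NNPP => hnp; apply: hn.
    case: M hr hp {IH hn} => [|[[j e'] g'] M2] //= _ [ej [ee hs]].
    exists [::], i, e, g, g', M2. by rewrite ej ee.
  - have [M1 [i' [e1 [g1 [g1' [M2 [-> hs]]]]]]] := IH hr.
    by exists ((i, e, g) :: M1), i', e1, g1, g1', M2.
Qed.

Lemma pinch_reduce g0 M1 i e g g' M2 : SA i e g ->
  exists g1 M', size M' < size (M1 ++ (i, e, g) :: (i, ~~ e, g') :: M2) /\
    A1_eq (real g0 (M1 ++ (i, e, g) :: (i, ~~ e, g') :: M2)) (real g1 M').
Proof.
  move=> hs.
  set z := tr i e g ** g'.
  have hz : A1_eq (r0 ((i, e, g) :: (i, ~~ e, g') :: M2)) (hL z :: r0 M2).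
  { rewrite /=. have h1 := eq_catr (hL g' :: r0 M2) (P5 hs). rewrite /= in h1.
    apply: A1_trans h1 _. exact: (eq_catr (r0 M2) (hL_mul _ g')). }
  case: M1 => [|x M1].
  - exists (g0 ** z), M2. split; first by rewrite /= ltnS leqnSn.
    rewrite /real /=. apply: A1_trans (eq_catl [:: hL g0] hz) _.
    exact: (eq_catr (r0 M2) (hL_mul g0 z)).
  - exists g0, (ml (x :: M1) z ++ M2). split.
    + rewrite size_cat size_ml /= size_cat /= addnS addnS ltnS addSn leqW //.
    + rewrite /real r0_cat r0_cat.
      apply: (eq_catl [:: hL g0]).
      apply: A1_trans (eq_catl (r0 (x :: M1)) hz) _.
      have h := eq_catr (r0 M2) (r0_ml z (ltac:(by []) : x :: M1 <> [::])).
      rewrite -catA /= in h. exact: h.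
Qed.

End Reduce.

Section Main.
Variable H : AGroup.
Local Notation G := (prodG H).
Local Notation "x ** y" := (@gmul G x y) (at level 40, left associativity).
Local Notation "1" := (gone G).

Definition Good (u : A1_word H) : Prop :=
  (exists m, 0 < m /\ TP u m) -> exists z : G, forall m, TP u m <-> TP [:: hL z] m.

Lemma Good_equiv (u v : A1_word H) : (forall m, TP u m <-> TP v m) -> Good v -> Good u.
Proof.
  move=> he hg [m [hm hu]]. have [z hz] := hg (ex_intro _ m (conj hm (proj1 (he m) hu))).
  exists z => m'. rewrite he. exact: hz.
Qed.

Fixpoint Mpow (M : Lt H) (n : nat) : Lt H :=
  match n with O => [::] | S n' => M ++ Mpow M n' end.

Lemma r0_pow M n : A1_pow (r0 M) n = r0 (Mpow M n).
Proof. elim: n => [|n IH] //=. by rewrite r0_cat IH. Qed.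

Fixpoint redp (M : Lt H) (o : option (FGA H * bool)) : Prop :=
  match M with
  | [::] => True
  | (i, e, g) :: M' => ~ pinch i e g (if M' is [::] then o else hdk M') /\ redp M' o
  end.

Lemma red_cat (A B : Lt H) : red (A ++ B) <-> redp A (hdk B) /\ red B.
Proof.
  elim: A => [|[[i e] g] A IH] /=; first by split; [move=> h; split | case].
  have -> : hdk (A ++ B) = if A is [::] then hdk B else hdk A by case: A {IH}.
  rewrite IH. split; [by move=> [a [b c]] | by move=> [[a b] c]].
Qed.

Lemma hdk_pow M n : 0 < n -> hdk (Mpow M n) = hdk M.
Proof.
  case: n => [|n] //= _. case: M => [|[[i e] g] M] //=. by elim: n.
Qed.

Lemma red_pow M n : red (M ++ M) -> 0 < n -> red (Mpow M n).
Proof.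
  move=> h. elim: n => [|n IH] // _. case: n IH => [|n] IH.
  - rewrite /= cats0. by have [_ ?] := proj1 (red_cat M M) h.
  - have [h1 h2] := proj1 (red_cat M M) h.
    have e : hdk (M ++ Mpow M n) = hdk M by apply: (@hdk_pow M n.+1).
    rewrite /=. apply/red_cat. rewrite e. split => //. exact: IH.
Qed.

Lemma wrap x (Mr : Lt H) : red (x :: Mr) -> red (Mr ++ [:: x]) -> red ((x :: Mr) ++ (x :: Mr)).
Proof.
  case: x => [[i e] g] h1 h2. apply/red_cat. split => //.
  have [h3 _] := proj1 (red_cat Mr [:: (i, e, g)]) h2.
  rewrite /=. split => //.
  case: Mr h1 {h2 h3} => [|y Mr] /=.
  - move=> _ [_ [ee _]]. by case: e ee.
  - by move=> [].
Qed.

Lemma Mpow_nil M n : M <> [::] -> 0 < n -> Mpow M n <> [::].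
Proof. case: n => [|n] //= hM _. case: M hM => //. Qed.

Lemma real1 M : A1_eq (real 1 M) (r0 M).
Proof. exact: (eq_catr (r0 M) (hL1 H)). Qed.

Lemma TP_eqv (u v : A1_word H) : A1_eq u v -> forall m, TP u m <-> TP v m.
Proof. move=> h m. exact: TP_eq. Qed.

Lemma goodr0 (M : Lt H) : (forall g0 M', size M' < size M -> Good (real g0 M')) ->
  M <> [::] -> Good (r0 M).
Proof.
  move=> IH hM.
  case: (classic (red M)) => hr.
  - case: (classic (red (M ++ M))) => hrr.
    + move=> [m [hm hu]]. exfalso. rewrite /TP r0_pow in hu.
      apply: (britton (red_pow hrr hm) (Mpow_nil hM hm)). exact: hu.
    + case: M hM hr hrr IH => [|x Mr] // _ hr hrr IH.
      have hn : ~ red (Mr ++ [:: x]) by move=> h; apply: hrr; exact: wrap.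
      have [M1 [i [e [g [g' [M2 [eM hs]]]]]]] := not_red hn.
      have [g1 [M' [hsz heq]]] := pinch_reduce 1 M1 g' M2 hs.
      rewrite -eM in hsz heq.
      have hsz' : size M' < size (x :: Mr) by rewrite size_cat addn1 in hsz.
      apply: (Good_equiv (v := real g1 M')); last exact: IH.
      move=> m. move: heq. case: x {IH hr hrr hn eM hsz hsz'} => [[i0 e0] g0] heq.
      have -> : r0 ((i0, e0, g0) :: Mr) = [:: tL i0 e0; hL g0] ++ r0 Mr by [].
      rewrite TP_rot -(r0_cat Mr [:: (i0, e0, g0)]).
      rewrite -(TP_eqv (real1 _)). exact: TP_eqv.
  - have [M1 [i [e [g [g' [M2 [eM hs]]]]]]] := not_red hr.
    have [g1 [M' [hsz heq]]] := pinch_reduce 1 M1 g' M2 hs.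
    rewrite -eM in hsz heq.
    apply: (Good_equiv (v := real g1 M')); last exact: IH.
    move=> m. rewrite -(TP_eqv (real1 _)). exact: TP_eqv.
Qed.

Lemma good_real N : forall g0 (M : Lt H), size M <= N -> Good (real g0 M).
Proof.
  elim: N => [|N IHN] g0 M hs.
  - case: M hs => // _. move=> _. exists g0 => m. by [].
  - case: M hs => [|x M] hs.
    + move=> _. exists g0 => m. by [].
    + apply: (Good_equiv (v := r0 (ml (x :: M) g0))).
      * move=> m. rewrite /real.
        have -> : hL g0 :: r0 (x :: M) = [:: hL g0] ++ r0 (x :: M) by [].
        rewrite TP_rot. apply: TP_eqv. exact: r0_ml.
      * apply: goodr0.
        -- move=> g1 M' hM'. apply: IHN. rewrite size_ml in hM'.
           rewrite -ltnS. exact: (leq_trans hM' hs).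
        -- move=> h. have := size_ml (x :: M) g0. by rewrite h.
Qed.

Lemma good_all (u : A1_word H) : Good u.
Proof.
  have [g0 [M h]] := to_struct u.
  apply: (Good_equiv (v := real g0 M)); first exact: TP_eqv.
  exact: (good_real (leqnn _)).
Qed.

End Main.

Section Final.
Variable H : AGroup.
Local Notation "x ** y" := (@gmul H x y) (at level 40, left associativity).

Lemma pow_LH (a b : H) m : A1_eq (A1_pow [:: LH a b] m) [:: LH (gpow a m) (gpow b m)].
Proof.
  elim: m => [|m IH] /=.
  - apply: A1_sym. exact: (eq_rel (rel_H1 H)).
  - apply: A1_trans (eq_catl [:: LH a b] IH) _. exact: (eq_rel (rel_HH _ _ _ _)).
Qed.

Lemma TP_LH (a b : H) m : TP [:: LH a b] m <-> gpow a m = gone H /\ gpow b m = gone H.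
Proof.
  rewrite /TP. split.
  - move=> h. have h2 := A1_trans (A1_sym (pow_LH a b m)) h.
    have := eq_act0 h2. rewrite /= /mulN /w0 /=.
    rewrite mulg1'. move=> [e1 e2]. by split.
  - move=> [ha hb]. apply: A1_trans (pow_LH a b m) _. rewrite ha hb. exact: (eq_rel (rel_H1 H)).
Qed.

Lemma gpow_gcd (x : H) m n : gpow x m = gone H -> gpow x n = gone H -> gpow x (gcdn m n) = gone H.
Proof.
  elim: m {-2}m (leqnn m) n => [|N IHN] m hm n hxm hxn.
  - move: hm. rewrite leqn0 => /eqP ->. by rewrite gcd0n.
  - case: (posnP m) => [-> | m0]; first by rewrite gcd0n.
    rewrite gcdnE. have -> : (m == 0) = false by case: m m0 {hm hxm}.
    apply: IHN => //.
    + rewrite -ltnS. apply: leq_trans _ hm. exact: ltn_pmod.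
    + move: hxn. rewrite {1}(divn_eq n m) gpowD mulnC gpowM1 // gmul1. done.
Qed.

Lemma ord_pk (x : H) p k : prime p -> gpow x (p ^ k.+1) = gone H -> gpow x (p ^ k) <> gone H ->
  has_order x (p ^ k.+1).
Proof.
  move=> hp h1 h2. split; first by rewrite expn_gt0 prime_gt0.
  split => // m m0 mlt hm. apply: h2.
  have hg := gpow_gcd hm h1.
  have /(dvdn_pfactor _ _ hp) [j hj ej] := dvdn_gcdr m (p ^ k.+1).
  have hle : gcdn m (p ^ k.+1) <= m by apply: dvdn_leq => //; exact: dvdn_gcdl.
  have hjk : j < k.+1.
  { rewrite -(ltn_exp2l _ _ (prime_gt1 hp)) -ej. exact: (leq_ltn_trans hle mlt). }
  rewrite -(subnKC (hjk : j <= k)) expnD -ej. exact: gpowM1.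
Qed.

End Final.

Theorem lemma4p7 (H : AGroup) (p k : nat) (hp : prime p) :
  (exists w : A1_word H, A1_has_order w (p ^ k)) <->
  (exists h : H, has_order h (p ^ k)).
Proof.
  split.
  - move=> [w [hn [hw hmin]]].
    have [z hz] := good_all (ex_intro _ (p ^ k) (conj hn hw)).
    case: z hz => a b hz.
    have hz' : forall m, TP w m <-> gpow a m = gone H /\ gpow b m = gone H.
    { move=> m. rewrite hz. exact: TP_LH. }
    case: k hn hw hmin hz' => [|k] hn hw hmin hz'.
    + exists (gone H). split => //. split; first by rewrite /= gmul1.
      move=> m m0 m1. by case: m m0 m1.
    + have [ha hb] := proj1 (hz' _) hw.
      have hq0 : 0 < p ^ k by rewrite expn_gt0 prime_gt0.
      have hqlt : p ^ k < p ^ k.+1 by rewrite ltn_exp2l // prime_gt1.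
      case: (classic (gpow a (p ^ k) = gone H)) => hak.
      * exists b. apply: ord_pk => // hbk. apply: (hmin _ hq0 hqlt). apply/hz'. by split.
      * exists a. exact: ord_pk.
  - move=> [h [hn [hh hmin]]]. exists [:: LH h (gone H)].
    have g1 : forall m, gpow (gone H) m = gone H.
    { elim => [|m IH] //=. by rewrite IH gmul1. }
    split => //. split.
    + apply/TP_LH. by rewrite g1.
    + move=> m m0 m1 hm. have [hm' _] := proj1 (TP_LH _ _ _) hm. exact: (hmin m m0 m1).
Qed.
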